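(* In the setting described in the context, suppose that for every $i\in[k]$ and every $(\mathcal F_T)$-stopping time $\tau$ that is almost surely finite, there exist nonnegative random variables $E^+_{i\tau},E^-_{i\tau}$ (not depending on $\beta$) with $\mathbb E[E^+_{i\tau}]\le 1$, $\mathbb E[E^-_{i\tau}]\le 1$, such that for every $\beta\in(0,1)$, almost surely, $\mathbb I\{\theta_i\le L_{i\tau}(\beta)\}\le\mathbb I\{E^-_{i\tau}\ge 1/\beta\}$ and $\mathbb I\{\theta_i\ge U_{i\tau}(\beta)\}\le\mathbb I\{E^+_{i\tau}\ge 1/\beta\}$. Then for every $\alpha\in(0,1)$ and every almost surely finite $(\mathcal F_T)$-stopping time $\tau$, with $\tilde\alpha=\alpha|\hat{\mathcal S}_\tau|/(2k)$, we have $\mathrm{sFCR}(\tilde\alpha)\le\alpha$.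
   Context: Setting: $(\Omega,\mathcal F,\mathbb P)$ is a probability space with a filtration $(\mathcal F_T)_{T\in\mathbb N}$; $k\ge2$, $m\in\{1,\dots,k-1\}$, $\alpha\in(0,1)$; $\theta_1\ge\dots\ge\theta_k$ are real parameters; $[k]=\{1,\dots,k\}$. For each $i\in[k]$ and $\beta\in(0,1)$, $(L_{iT}(\beta))_{T}$ and $(U_{iT}(\beta))_T$ are $(\mathcal F_T)$-adapted processes with values in $[-\infty,\infty]$, with $L_{iT}(\beta)\le U_{iT}(\beta)$, satisfying $\mathbb P(\exists T\in\mathbb N:\theta_i\le L_{iT}(\beta))\le\beta$ and $\mathbb P(\exists T\in\mathbb N:\theta_i\ge U_{iT}(\beta))\le\beta$. SCS procedure: set $\alpha_{km}=\alpha/\{2m(k-m)\}$, $\hat{\mathcal S}_0=[k]$, and for $T\in\mathbb N$ let $L^{(m)}_T(\alpha_{km})$ be the $m$-th largest among $\{L_{iT}(\alpha_{km}):i\in\hat{\mathcal S}_{T-1}\}$ and $\hat{\mathcal S}_T=\hat{\mathcal S}_{T-1}\setminus\{i\in\hat{\mathcal S}_{T-1}:U_{iT}(\alpha_{km})<L^{(m)}_T(\alpha_{km})\}$. Stopped false coverage rate: for a stopping time $\tau$ and a (possibly random, $\mathcal F_\tau$-measurable) level $a$, $\mathrm{sFCR}(a)=\mathbb E\Big[\sum_{i\in\hat{\mathcal S}_\tau}\frac{\mathbb I\{\theta_i\notin(L_{i\tau}(a),U_{i\tau}(a))\}}{|\hat{\mathcal S}_\tau|}\Big]$. *)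

(* Defs.v *)
From HB Require Import structures.
From mathcomp Require Import all_boot all_order all_algebra.
From mathcomp Require Import all_classical all_reals all_analysis.
From mathcomp Require Import measurable_realfun.
Set Implicit Arguments. Unset Strict Implicit. Unset Printing Implicit Defensive.
Import Order.TTheory GRing.Theory Num.Theory.
Local Open Scope classical_set_scope.
Local Open Scope ring_scope.

Section Defs.
Context {R : realType}.

Definition mth_largest (m : nat) (s : seq (\bar R)) : \bar R :=
  nth -oo%E (sort (fun x y : \bar R => (y <= x)%E) s) m.-1.

(* SCS selected set at time n (times are positive naturals; n = 0 gives
   the initial set [k]).  [Lb i t], [Ub i t] are the values
   L_{it}(alpha_km), U_{it}(alpha_km) at a fixed outcome. *)
Fixpoint scs_set (k m : nat) (Lb Ub : 'I_k -> nat -> \bar R) (n : nat)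
  : {set 'I_k} :=
  match n with
  | 0 => [set: 'I_k]
  | n'.+1 =>
      let S := scs_set m Lb Ub n' in
      let lm := mth_largest m [seq Lb i n'.+1 | i <- enum S] in
      [set i in S | ~~ (Ub i n'.+1 < lm)%E]
  end.

Definition alpha_km (k m : nat) (alpha : R) : R :=
  alpha / (2 * m * (k - m))%:R.

(* value of an (option nat)-valued stopping time; the arbitrary default 0
   is only used on the null set {tau = None} *)
Definition stop_val {T : Type} (tau : T -> option nat) (w : T) : nat :=
  odflt 0%N (tau w).

Definition scs_at {T : Type} (k m : nat) (alpha : R)
  (L U : 'I_k -> R -> nat -> T -> \bar R) (tau : T -> option nat) (w : T)
  : {set 'I_k} :=
  scs_set m (fun i t => L i (alpha_km k m alpha) t w)
            (fun i t => U i (alpha_km k m alpha) t w) (stop_val tau w).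

(* Stopping time w.r.t. a filtration F (times in positive naturals,
   value None = infinity) *)
Definition is_stopping_time {T : Type} (F : nat -> set (set T))
  (tau : T -> option nat) : Prop :=
  (forall w t, tau w = Some t -> (0 < t)%N) /\
  (forall n, F n [set w | exists2 t, tau w = Some t & (t <= n)%N]).

Definition sFCR {d} {T : measurableType d} (P : probability T R) (k : nat)
  (theta : 'I_k -> R) (L U : 'I_k -> R -> nat -> T -> \bar R)
  (tau : T -> option nat) (S : T -> {set 'I_k}) (a : T -> R) : \bar R :=
  (\int[P]_w
     ((\sum_(i in S w)
         (~~ ((L i (a w) (stop_val tau w) w < (theta i)%:E)%E &&
              ((theta i)%:E < U i (a w) (stop_val tau w) w)%E))%:R)
      / #|S w|%:R)%:E)%E.

End Defs.

(* Main.v *)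
Require Import Defs.
From HB Require Import structures.
From mathcomp Require Import all_boot all_order all_algebra.
From mathcomp Require Import all_classical all_reals all_analysis.
From mathcomp Require Import measurable_realfun ring lra.
Import Order.TTheory GRing.Theory Num.Theory.
Local Open Scope classical_set_scope.
Local Open Scope ring_scope.

Lemma key (R : realType) k (S : {set 'I_k}) (th : 'I_k -> R)
  (Lw Uw Ep Em : 'I_k -> \bar R) (b c : R) :
  0 <= c -> (forall i, 0 <= Ep i)%E -> (forall i, 0 <= Em i)%E ->
  (0 < #|S|)%N -> 0 < b -> c * #|S|%:R = b ->
  (forall i, (((th i)%:E <= Lw i)%E -> (Em i >= b^-1%:E)%E) /\
             (((th i)%:E >= Uw i)%E -> (Ep i >= b^-1%:E)%E)) ->
  (((\sum_(i in S) (~~ ((Lw i < (th i)%:E)%E && ((th i)%:E < Uw i)%E))%:R)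
     / #|S|%:R)%:E <= c%:E * \sum_(i < k) (Ep i + Em i))%E.
Proof.
move=> c0 Ep0 Em0 s0 b0 cb H.
have sne : (#|S|%:R : R) != 0 by rewrite pnatr_eq0 -lt0n.
have -> : (\sum_(i in S) (~~ ((Lw i < (th i)%:E)%E && ((th i)%:E < Uw i)%E))%:R)
     / #|S|%:R = c * \sum_(i in S)
        ((~~ ((Lw i < (th i)%:E)%E && ((th i)%:E < Uw i)%E))%:R / b).
  have cne : c != 0 by apply/eqP => cz; move: b0; rewrite -cb cz mul0r ltxx.
  rewrite mulr_suml mulr_sumr; apply: eq_bigr => i _; rewrite -cb.
  by field; rewrite sne cne.
rewrite EFinM -sumEFin; apply: lee_wpmul2l; first by rewrite lee_fin.
apply: (@le_trans _ _ (\sum_(i in S) (Ep i + Em i))%E).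
  apply: lee_sum => i _.
  case: (H i) => HL HU.
  case: (boolP ((Lw i < (th i)%:E)%E && ((th i)%:E < Uw i)%E)) => /= h.
    by rewrite mul0r adde_ge0.
  rewrite mul1r.
  move: h; rewrite negb_and -!leNgt => /orP[h|h].
    by apply: lee_paddl; [exact: Ep0 | exact: HL].
  by rewrite addeC; apply: lee_paddl; [exact: Em0 | exact: HU].
rewrite [X in (_ <= X)%E](bigID (fun i => i \in S)) /=.
by apply: lee_paddr; [apply: sume_ge0 => i _; exact: adde_ge0|].
Qed.

Lemma ge0_le_integral_nm (R : realType) d (T : measurableType d)
  (mu : {measure set T -> \bar R}) (f1 f2 : T -> \bar R) :
  (forall x, 0 <= f1 x)%E -> (forall x, f1 x <= f2 x)%E ->
  (\int[mu]_x f1 x <= \int[mu]_x f2 x)%E.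
Proof.
move=> f10 f12.
have f20 x : (0 <= f2 x)%E by apply: le_trans (f12 x).
rewrite !ge0_integralTE//; apply: ereal_sup_le => _ [h /= hf <-].
by exists h => //= x; apply: le_trans (hf x) (f12 x).
Qed.

Theorem theorem2 (R : realType) (d : measure_display) (Omega : measurableType d)
  (P : probability Omega R)
  (F : nat -> set (set Omega))
  (k m : nat) (theta : 'I_k -> R)
  (L U : 'I_k -> R -> nat -> Omega -> \bar R) :
  (* filtration *)
  (forall n, sigma_algebra setT (F n)) ->
  (forall n, F n `<=` measurable) ->
  (forall n, F n `<=` F n.+1) ->
  (* parameters *)
  (2 <= k)%N -> (1 <= m)%N -> (m <= k - 1)%N ->
  (forall i j : 'I_k, (i <= j)%N -> theta j <= theta i) ->
  (* adapted processes, L <= U, anytime-valid one-sided coverage *)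
  (forall i b n (B : set (\bar R)), 0 < b < 1 -> (0 < n)%N -> measurable B ->
     F n (L i b n @^-1` B) /\ F n (U i b n @^-1` B)) ->
  (forall i b n w, 0 < b < 1 -> (0 < n)%N -> (L i b n w <= U i b n w)%E) ->
  (forall i b, 0 < b < 1 ->
     (P [set w | exists n, (0 < n)%N /\ ((theta i)%:E <= L i b n w)%E]
        <= b%:E)%E /\
     (P [set w | exists n, (0 < n)%N /\ ((theta i)%:E >= U i b n w)%E]
        <= b%:E)%E) ->
  (* e-variable hypothesis *)
  (forall (i : 'I_k) (tau : Omega -> option nat),
     is_stopping_time F tau -> P [set w | tau w = None] = 0%E ->
     exists Ep Em : Omega -> \bar R,
       [/\ measurable_fun setT Ep /\ measurable_fun setT Em,
           (forall w, 0 <= Ep w)%E /\ (forall w, 0 <= Em w)%E,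
           (\int[P]_w Ep w <= 1)%E /\ (\int[P]_w Em w <= 1)%E &
           forall b, 0 < b < 1 ->
             {ae P, forall w,
                 (((theta i)%:E <= L i b (stop_val tau w) w)%E ->
                    (Em w >= (b^-1)%:E)%E) /\
                 (((theta i)%:E >= U i b (stop_val tau w) w)%E ->
                    (Ep w >= (b^-1)%:E)%E)}]) ->
  forall (alpha : R) (tau : Omega -> option nat),
    0 < alpha < 1 ->
    is_stopping_time F tau -> P [set w | tau w = None] = 0%E ->
    (sFCR P theta L U tau (scs_at m alpha L U tau)
       (fun w => (alpha * #|scs_at m alpha L U tau w|%:R / (2 * k%:R))%R)
     <= alpha%:E)%E.

Proof.
move=> _ _ _ k2 m1 mk _ _ _ _ He alpha tau /andP[a0 a1] Htau Hnone.
have [Ep HEp] := choice (fun i => He i tau Htau Hnone).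
have [Em HEm] := choice HEp.
set S := scs_at m alpha L U tau.
pose bj (j : nat) : R := alpha * j%:R / (2 * k%:R).
pose c : R := alpha / (2 * k%:R).
have k0 : (0 : R) < k%:R by rewrite ltr0n (leq_trans _ k2).
have c0 : 0 <= c by rewrite /c divr_ge0 // ?ltW // mulr_ge0 // ltW.
have bjP : forall j : nat, (0 < j)%N -> (j <= k)%N -> 0 < bj j < 1.
  move=> j j0 jk; have jR : (0 : R) < j%:R by rewrite ltr0n.
  have jkR : (j%:R : R) <= k%:R by rewrite ler_nat.
  rewrite /bj; apply/andP; split.
    by rewrite divr_gt0 // ?mulr_gt0 //.
  rewrite ltr_pdivrMr ?mulr_gt0 // mul1r.
  nra.
have aeg : \forall w \near almost_everywhere P, forall ij : 'I_k * 'I_k.+1,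
    (0 < ij.2)%N ->
    (((theta ij.1)%:E <= L ij.1 (bj ij.2) (stop_val tau w) w)%E ->
       ((bj ij.2)^-1%:E <= Em ij.1 w)%E) /\
    (((theta ij.1)%:E >= U ij.1 (bj ij.2) (stop_val tau w) w)%E ->
       ((bj ij.2)^-1%:E <= Ep ij.1 w)%E).
  apply: filter_forall => -[i j] /=.
  have [j0|jp] := posnP j.
    by apply: nearW => w; rewrite j0.
  have [_ _ _ H] := HEm i.
  have := H (bj j) (bjP j jp (ltn_ord j)).
  by apply: filterS => w hw _; exact: hw.
case: aeg => A [mA PA0 sA].
have mEp i : measurable_fun setT (Ep i) by have [[]] := HEm i.
have mEm i : measurable_fun setT (Em i) by have [[]] := HEm i.
have Ep0 i w : (0 <= Ep i w)%E by have [_ [] ] := HEm i.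
have Em0 i w : (0 <= Em i w)%E by have [_ [] ] := HEm i.
have iEp i : (\int[P]_w Ep i w <= 1)%E by have [_ _ [] ] := HEm i.
have iEm i : (\int[P]_w Em i w <= 1)%E by have [_ _ [] ] := HEm i.
pose g w := (c%:E * \sum_(i < k) (Ep i w + Em i w) + (\1_A w)%:E)%E.
have sum0 w : (0 <= \sum_(i < k) (Ep i w + Em i w))%E.
  by apply: sume_ge0 => i _; exact: adde_ge0.
have g0 w : (0 <= g w)%E.
  by rewrite /g adde_ge0 ?mule_ge0 ?lee_fin ?indicE.
rewrite /sFCR; apply: (@le_trans _ _ (\int[P]_w g w)%E).
  apply: ge0_le_integral_nm => w.
    by rewrite lee_fin divr_ge0 // sumr_ge0.
  have [Aw|nAw] := pselect (A w).
    rewrite /g indicE mem_set //; apply: lee_paddl; first exact: mule_ge0.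
    rewrite lee_fin.
    have [s0|sp] := posnP #|S w|; first by rewrite s0 invr0 mulr0.
    rewrite ler_pdivrMr ?ltr0n // mul1r.
    apply: (@le_trans _ _ (\sum_(i in S w) (1:R))); last by rewrite sumr_const.
    by apply: ler_sum => i _; case: (~~ _); rewrite ?lexx ?ler01.
  have gw : forall ij : 'I_k * 'I_k.+1,
    (0 < ij.2)%N ->
    (((theta ij.1)%:E <= L ij.1 (bj ij.2) (stop_val tau w) w)%E ->
       ((bj ij.2)^-1%:E <= Em ij.1 w)%E) /\
    (((theta ij.1)%:E >= U ij.1 (bj ij.2) (stop_val tau w) w)%E ->
       ((bj ij.2)^-1%:E <= Ep ij.1 w)%E).
    by apply: contrapT => h; exact: nAw (sA w h).
  rewrite /g indicE memNset //= adde0.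
  have [s0|sp] := posnP #|S w|.
    by rewrite s0 invr0 mulr0 mule_ge0.
  have sk : (#|S w| < k.+1)%N by rewrite ltnS -[X in (_ <= X)%N]card_ord max_card.
  have := @key R k (S w) theta
    (fun i => L i (bj #|S w|) (stop_val tau w) w)
    (fun i => U i (bj #|S w|) (stop_val tau w) w)
    (fun i => Ep i w) (fun i => Em i w) (bj #|S w|) c c0 (fun i => Ep0 i w)
    (fun i => Em0 i w) sp (proj1 (andP (bjP _ sp (ltnSE sk)))).
  apply.
    by rewrite /c /bj mulrAC.
  by move=> i; exact: (gw (i, Ordinal sk) sp).
have mS : measurable_fun setT (fun w => \sum_(i < k) (Ep i w + Em i w))%E.
  by apply: emeasurable_sum => i; exact: emeasurable_funD.
have mI : measurable_fun setT (fun w => (\1_A w)%:E : \bar R).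
  by apply/measurable_EFinP; exact: measurable_indic.
have mcS : measurable_fun setT
    (fun w => c%:E * \sum_(i < k) (Ep i w + Em i w))%E.
  exact: measurable_funeM.
have cS0 : forall w, setT w ->
    (0 <= c%:E * \sum_(i < k) (Ep i w + Em i w))%E.
  by move=> w _; rewrite mule_ge0 ?lee_fin.
have I0 : forall w, setT w -> (0 <= ((\1_A w)%:E : \bar R))%E.
  by move=> w _; rewrite lee_fin indicE.
rewrite /g ge0_integralD //.
rewrite integral_indic // setIT. rewrite [X in (_ + X <= _)%E](_ : _ = 0); last exact: PA0. rewrite adde0 ge0_integralZl_EFin //.
rewrite ge0_integral_sum //; first last.
  by move=> i w _; exact: adde_ge0.
  by move=> i; exact: emeasurable_funD.
apply: (@le_trans _ _ (c%:E * \sum_(i < k) (2%:E : \bar R))%E).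
  apply: lee_wpmul2l; first by rewrite lee_fin.
  apply: lee_sum => i _; rewrite ge0_integralD //.
  by rewrite -[2%:E]/((1 + 1)%:E) EFinD; apply: leeD.
rewrite sumEFin sumr_const card_ord -EFinM lee_fin /c.
rewrite le_eqVlt; apply/orP; left; apply/eqP.
by rewrite -mulr_natr; field; rewrite pnatr_eq0 -lt0n (leq_trans _ k2).
Qed.
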